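(* Let $\Gamma=(V,E)$ be a graph, for each $v\in V$ let $C_v$ be a right cancellative monoid, and let $C=\Gamma_{v\in V}C_v$. Let $c$ be a non-unit of $C_v$ and $d$ a non-unit of $C_u$, where $(u,v)\in E$. Then $Cc\cap Cd=Ccd$.
   Context: A graph $\Gamma=(V,E)$ has vertex set $V$ and irreflexive symmetric edge relation $E$. The graph product $\Gamma_{v\in V}C_v$ of pairwise disjoint monoids $C_v$ is the quotient of their free product by the congruence generated by all pairs $(mn,nm)$ with $m\in C_u$, $n\in C_v$, $(u,v)\in E$; each $C_v$ is identified with its image in $C$. *)

(* Defs.v *)
From Stdlib Require Import List.
Import ListNotations.

Definition is_monoid (M : Type) (op : M -> M -> M) (e : M) : Prop :=
  (forall a b c, op a (op b c) = op (op a b) c) /\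
  (forall a, op e a = a) /\ (forall a, op a e = a).

Definition right_cancellative (M : Type) (op : M -> M -> M) : Prop :=
  forall a b c, op a c = op b c -> a = b.

Definition is_unit (M : Type) (op : M -> M -> M) (e : M) (a : M) : Prop :=
  exists b, op a b = e /\ op b a = e.

Definition is_graph (V : Type) (E : V -> V -> Prop) : Prop :=
  (forall v, ~ E v v) /\ (forall u v, E u v -> E v u).

Section GraphProduct.
Variables (V : Type) (E : V -> V -> Prop) (C : V -> Type)
  (mul : forall v, C v -> C v -> C v) (one : forall v, C v).

Definition letter := { v : V & C v }.
Definition word := list letter.

(* Defining relations of the graph product, presented as a quotient of the
   free monoid on the letters: the first two give the free product of the
   C_v (unit of C_v is the empty word, products inside C_v are merged), the
   third gives the commutation relations mn = nm for m in C_u, n in C_v,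
   (u,v) in E. *)
Inductive gp_rel : word -> word -> Prop :=
  | gp_one v : gp_rel [existT _ v (one v)] []
  | gp_mul v a b : gp_rel [existT _ v a; existT _ v b] [existT _ v (mul v a b)]
  | gp_comm u v (m : C u) (n : C v) : E u v ->
      gp_rel [existT _ u m; existT _ v n] [existT _ v n; existT _ u m].

Inductive gp_eq : word -> word -> Prop :=
  | gp_step s l r t : gp_rel l r -> gp_eq (s ++ l ++ t) (s ++ r ++ t)
  | gp_refl w : gp_eq w w
  | gp_sym w1 w2 : gp_eq w1 w2 -> gp_eq w2 w1
  | gp_trans w1 w2 w3 : gp_eq w1 w2 -> gp_eq w2 w3 -> gp_eq w1 w3.

End GraphProduct.

(* Main.v *)
Require Import Defs.
From Stdlib Require Import List ClassicalEpsilon Classical Eqdep.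
Import ListNotations.

Ltac lsolve := repeat (simpl; rewrite ?app_nil_r, <- ?app_assoc); simpl; reflexivity.

Definition decb (P:Prop) : bool := if excluded_middle_informative P then true else false.
Lemma decb_iff P : decb P = true <-> P.
Proof. unfold decb; destruct excluded_middle_informative; split; congruence || tauto. Qed.
Lemma decb_true P : decb P = true -> P.
Proof. apply decb_iff. Qed.
Lemma true_decb (P:Prop) : P -> decb P = true.
Proof. apply decb_iff. Qed.
Lemma decb_ext P Q : (P <-> Q) -> decb P = decb Q.
Proof. intro H; unfold decb; do 2 destruct excluded_middle_informative; tauto. Qed.

Lemma filter_nil_all {A} (f : A -> bool) l : (forall a, In a l -> f a = false) -> filter f l = [].
Proof. induction l; simpl; intros H; auto. rewrite H by auto. apply IHl; auto. Qed.
Lemma filter_nil_in {A} (f : A -> bool) l : filter f l = [] -> forall a, In a l -> f a = false.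
Proof. induction l; simpl; intros H b Hb; [contradiction|].
  destruct (f a) eqn:Ha; [discriminate|]. destruct Hb; subst; auto. Qed.
Lemma filter_snoc_split {A} (f : A -> bool) w l a : filter f w = l ++ [a] ->
  exists w1 w2, w = w1 ++ a :: w2 /\ filter f w1 = l /\ filter f w2 = [].
Proof.
  revert l a; induction w using rev_ind; intros l a H.
  - simpl in H. destruct l; discriminate.
  - rewrite filter_app in H; simpl in H. destruct (f x) eqn:Hx.
    + apply app_inj_tail in H as [H1 H2]; subst. exists w, []; auto.
    + rewrite app_nil_r in H. destruct (IHw _ _ H) as (w1&w2&->&H1&H2).
      exists w1, (w2 ++ [x]); split; [rewrite <- app_assoc; reflexivity|split; auto].
      rewrite filter_app, H2; simpl; rewrite Hx; reflexivity.
Qed.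

Lemma split_unique {A} (P : A -> Prop) a b c d (L L' : A) :
  a ++ L :: b = c ++ L' :: d -> P L -> P L' -> Forall (fun X => ~ P X) b ->
  Forall (fun X => ~P X) d -> a = c /\ L = L' /\ b = d.
Proof.
  revert c; induction a; intros c H HL HL' Hb Hd; destruct c; simpl in H; inversion H; subst.
  - auto.
  - exfalso. rewrite Forall_forall in Hb. apply (Hb L'); auto. apply in_or_app; simpl; auto.
  - exfalso. rewrite Forall_forall in Hd. apply (Hd L); auto. apply in_or_app; simpl; auto.
  - destruct (IHa c H2) as (->&->&->); auto.
Qed.

Lemma two_split {A} (a b c d : list A) (L L' : A) : a ++ L :: b = c ++ L' :: d -> L <> L' ->
  (exists k, a = c ++ L' :: k /\ d = k ++ L :: b) \/ (exists k, c = a ++ L :: k /\ b = k ++ L' :: d).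
Proof.
  intros H Hn. destruct (app_eq_app _ _ _ _ H) as [l [[H1 H2]|[H1 H2]]].
  - destruct l as [|X l']; simpl in H2; inversion H2; subst.
    + congruence.
    + left; exists l'; auto.
  - destruct l as [|X l']; simpl in H2; inversion H2; subst.
    + congruence.
    + right; exists l'; auto.
Qed.

Section GP.
Variables (V : Type) (E : V -> V -> Prop) (C : V -> Type)
  (mul : forall v, C v -> C v -> C v) (one : forall v, C v).
Hypothesis HE : is_graph V E.
Hypothesis Hmon : forall v, is_monoid (C v) (mul v) (one v).
Hypothesis Hrc : forall v, right_cancellative (C v) (mul v).

Notation W := (word V C).
Notation geq := (gp_eq V E C mul one).

Lemma Eirr x : ~ E x x. Proof. apply HE. Qed.
Lemma Esym x y : E x y -> E y x. Proof. apply HE. Qed.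
Lemma massoc v a b c : mul v a (mul v b c) = mul v (mul v a b) c. Proof. apply Hmon. Qed.
Lemma mlid v a : mul v (one v) a = a. Proof. apply Hmon. Qed.
Lemma mrid v a : mul v a (one v) = a. Proof. apply Hmon. Qed.

Lemma nonunit_prod v (t c : C v) : ~ is_unit (C v) (mul v) (one v) c -> mul v t c <> one v.
Proof.
  intros Hn H. apply Hn. exists t; split; auto.
  apply (Hrc v _ _ c). rewrite <- massoc, H, mrid, mlid. reflexivity.
Qed.
Lemma nonunit_ne v (c : C v) : ~ is_unit (C v) (mul v) (one v) c -> c <> one v.
Proof. intros Hn ->. apply Hn. exists (one v). rewrite mrid; auto. Qed.

Definition adj x (L : letter V C) : Prop := E (projT1 L) x.
Definition IsTail x (r : W) r1 (t : C x) r2 := r = r1 ++ existT C x t :: r2 /\ Forall (adj x) r2.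
Definition mk x (s : C x) : W := if excluded_middle_informative (s = one x) then [] else [existT C x s].
Definition push (r : W) (x : V) (m : C x) : W :=
  match excluded_middle_informative (exists p : W * C x * W, IsTail x r (fst (fst p)) (snd (fst p)) (snd p)) with
  | left H => let p := proj1_sig (constructive_indefinite_description _ H) in
      fst (fst p) ++ mk x (mul x (snd (fst p)) m) ++ snd p
  | right _ => r ++ mk x m
  end.

Lemma mk_one x s : s = one x -> mk x s = [].
Proof. unfold mk; destruct excluded_middle_informative; tauto. Qed.
Lemma mk_ne x s : s <> one x -> mk x s = [existT C x s].
Proof. unfold mk; destruct excluded_middle_informative; tauto. Qed.

Lemma adj_notx x l : Forall (adj x) l -> Forall (fun X : letter V C => ~ projT1 X = x) l.
Proof. apply Forall_impl. unfold adj. intros a H He. rewrite He in H. exact (Eirr _ H). Qed.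

Lemma tail_unique x r r1 t r2 s1 t' s2 : IsTail x r r1 t r2 -> IsTail x r s1 t' s2 ->
  r1 = s1 /\ t = t' /\ r2 = s2.
Proof.
  intros [H1 H2] [H3 H4]. rewrite H1 in H3.
  destruct (split_unique (fun X : letter V C => projT1 X = x) _ _ _ _ _ _ H3) as (?&He&?); auto using adj_notx.
  apply inj_pair2 in He. auto.
Qed.

Lemma push_tail x r r1 t r2 m : IsTail x r r1 t r2 -> push r x m = r1 ++ mk x (mul x t m) ++ r2.
Proof.
  intro H. unfold push. destruct excluded_middle_informative as [H1|H1].
  - destruct (constructive_indefinite_description _ H1) as [[[s1 t'] s2] Hs]. simpl in *.
    destruct (tail_unique _ _ _ _ _ _ _ _ H Hs) as (->&->&->). reflexivity.
  - exfalso; apply H1; exists (r1,t,r2); exact H.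
Qed.
Lemma push_notail x r m : (forall r1 t r2, ~ IsTail x r r1 t r2) -> push r x m = r ++ mk x m.
Proof.
  intro H. unfold push. destruct excluded_middle_informative as [[[[a b] c] H1]|H1]; auto.
  exfalso; eapply H; eauto.
Qed.

Definition fp p q (w : W) := filter (fun L : letter V C => decb (projT1 L = p \/ projT1 L = q)) w.

Lemma fp_app p q a b : fp p q (a ++ b) = fp p q a ++ fp p q b.
Proof. apply filter_app. Qed.
Lemma fp_cons_in p q x t l : (x = p \/ x = q) -> fp p q (existT C x t :: l) = existT C x t :: fp p q l.
Proof. intro H. unfold fp; simpl. apply true_decb in H. rewrite H; auto. Qed.
Lemma fp_cons_out p q x t l : ~(x = p \/ x = q) -> fp p q (existT C x t :: l) = fp p q l.
Proof. intro H. unfold fp; simpl. destruct (decb (x = p \/ x = q)) eqn:Hd; auto. apply decb_true in Hd; tauto. Qed.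
Lemma fp_mk_out p q x s : ~(x = p \/ x = q) -> fp p q (mk x s) = [].
Proof. intro H. unfold mk; destruct excluded_middle_informative; auto. rewrite fp_cons_out; auto. Qed.
Lemma fp_adj_nil p q x l : ~E p q -> (x = p \/ x = q) -> Forall (adj x) l -> fp p q l = [].
Proof.
  intros Hpq Hx Hl. apply filter_nil_all. intros [z s] Hin. rewrite Forall_forall in Hl.
  specialize (Hl _ Hin). unfold adj in Hl; simpl in *.
  destruct (decb _) eqn:Hd; auto. apply decb_true in Hd.
  exfalso. destruct Hx as [<-|<-], Hd as [<-|<-].
  - exact (Eirr _ Hl).
  - exact (Hpq (Esym _ _ Hl)).
  - exact (Hpq Hl).
  - exact (Eirr _ Hl).
Qed.
Lemma fp_sym p q l : fp p q l = fp q p l.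
Proof. unfold fp. apply filter_ext. intro; apply decb_ext; tauto. Qed.

Definition Eqv (r r' : W) := forall p q, ~E p q -> fp p q r = fp p q r'.

Lemma fp_tail p q x r r1 t r2 : ~E p q -> (x = p \/ x = q) -> IsTail x r r1 t r2 ->
  fp p q r = fp p q r1 ++ [existT C x t].
Proof.
  intros Hpq Hx [-> H2]. rewrite fp_app, fp_cons_in by auto. rewrite (fp_adj_nil p q x r2); auto.
Qed.

Lemma tail_transfer x r r' r1 t r2 : IsTail x r r1 t r2 ->
  (forall z, ~E x z -> fp x z r = fp x z r') -> exists r1' r2', IsTail x r' r1' t r2'.
Proof.
  intros HT Hf.
  assert (Hxx : fp x x r' = fp x x r1 ++ [existT C x t]).
  { rewrite <- Hf by apply Eirr. apply (fp_tail x x x r r1 t r2); auto using Eirr. }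
  destruct (filter_snoc_split _ _ _ _ Hxx) as (r1'&r2'&Hr'&H1&H2).
  exists r1', r2'. split; auto.
  apply Forall_forall. intros [z s] Hin. unfold adj; simpl.
  pose proof (filter_nil_in _ _ H2 _ Hin) as Hz. simpl in Hz.
  assert (Hzx : z <> x).
  { intro He. subst. unfold decb in Hz. destruct excluded_middle_informative; [discriminate|tauto]. }
  destruct (classic (E z x)) as [|Hn]; auto. exfalso.
  assert (Hn' : ~ E x z) by (intro; apply Hn; apply Esym; auto).
  pose proof (Hf z Hn') as Hfz. rewrite (fp_tail x z x r r1 t r2) in Hfz; auto.
  rewrite Hr', fp_app, fp_cons_in in Hfz by auto.
  assert (Hne : fp x z r2' <> []).
  { intro Hnil. pose proof (filter_nil_in _ _ Hnil _ Hin) as Hc. simpl in Hc.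
    rewrite (true_decb (z = x \/ z = z)) in Hc; auto; discriminate. }
  destruct (exists_last Hne) as [l3 [b Hb]]. rewrite Hb in Hfz.
  replace (fp x z r1' ++ existT C x t :: l3 ++ [b]) with ((fp x z r1' ++ existT C x t :: l3) ++ [b]) in Hfz
    by (rewrite <- app_assoc; reflexivity).
  apply app_inj_tail in Hfz as [_ Hb2].
  assert (Hbin : In b r2').
  { assert (In b (fp x z r2')) by (rewrite Hb; apply in_or_app; simpl; auto).
    unfold fp in H; apply filter_In in H; tauto. }
  pose proof (filter_nil_in _ _ H2 _ Hbin) as Hc. rewrite <- Hb2 in Hc. simpl in Hc.
  rewrite (true_decb (x = x \/ x = x)) in Hc; auto; discriminate.
Qed.

Lemma fp_push_out p q x r m : ~(x = p \/ x = q) -> fp p q (push r x m) = fp p q r.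
Proof.
  intro Hx. destruct (classic (exists r1 t r2, IsTail x r r1 t r2)) as [[r1 [t [r2 H]]]|H].
  - rewrite (push_tail _ _ _ _ _ _ H). destruct H as [-> _].
    rewrite !fp_app, fp_mk_out, fp_cons_out; auto.
  - rewrite push_notail by (intros a b c Hc; apply H; eauto).
    rewrite fp_app, fp_mk_out, app_nil_r; auto.
Qed.

Lemma fp_push_in_eq p q x r r' m : ~E p q -> (x = p \/ x = q) ->
  (forall z, ~E x z -> fp x z r = fp x z r') -> fp p q (push r x m) = fp p q (push r' x m).
Proof.
  intros Hpq Hx Hf.
  assert (Hpq' : fp p q r = fp p q r').
  { destruct Hx as [<-|<-]; [apply Hf; auto|]. rewrite !(fp_sym p x). apply Hf.
    intro; apply Hpq; apply Esym; auto. }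
  destruct (classic (exists r1 t r2, IsTail x r r1 t r2)) as [[r1 [t [r2 H]]]|H].
  - destruct (tail_transfer _ _ _ _ _ _ H Hf) as (r1'&r2'&H').
    rewrite (push_tail _ _ _ _ _ _ H), (push_tail _ _ _ _ _ _ H').
    rewrite (fp_tail p q x r r1 t r2), (fp_tail p q x r' r1' t r2') in Hpq' by auto.
    apply app_inj_tail in Hpq' as [Heq _].
    destruct H as [_ H], H' as [_ H'].
    rewrite !fp_app, Heq, (fp_adj_nil p q x r2), (fp_adj_nil p q x r2'); auto.
  - assert (H' : forall r1 t r2, ~ IsTail x r' r1 t r2).
    { intros r1 t r2 HT. apply H. destruct (tail_transfer x r' r r1 t r2 HT) as (a&b&Hab).
      - intros z Hz; symmetry; auto.
      - eauto. }
    rewrite !push_notail by (auto; intros a b c Hc; apply H; eauto).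
    rewrite !fp_app, Hpq'. reflexivity.
Qed.

Lemma Eqv_push r r' x m : Eqv r r' -> Eqv (push r x m) (push r' x m).
Proof.
  intros H p q Hpq. destruct (classic (x = p \/ x = q)).
  - apply fp_push_in_eq; auto.
  - rewrite !fp_push_out; auto.
Qed.

Lemma Eqv_refl r : Eqv r r. Proof. intros p q _; auto. Qed.
Lemma Eqv_sym r r' : Eqv r r' -> Eqv r' r. Proof. intros H p q h; symmetry; auto. Qed.
Lemma Eqv_trans a b c : Eqv a b -> Eqv b c -> Eqv a c.
Proof. intros H1 H2 p q h; rewrite H1; auto. Qed.

Definition NoTailV x (s : list V) := forall s1 s2, s = s1 ++ x :: s2 -> ~ Forall (fun z => E z x) s2.
Inductive RedV : list V -> Prop :=
 | RedV_nil : RedV []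
 | RedV_snoc s x : RedV s -> NoTailV x s -> RedV (s ++ [x]).

Lemma RedV_inv s x : RedV (s ++ [x]) -> RedV s /\ NoTailV x s.
Proof.
  intro H. remember (s ++ [x]) as l eqn:Hl. destruct H.
  - destruct s; discriminate.
  - apply app_inj_tail in Hl as [-> ->]; auto.
Qed.
Lemma RedV_prefix s t : RedV (s ++ t) -> RedV s.
Proof.
  revert s; induction t using rev_ind; intros s H.
  - rewrite app_nil_r in H; auto.
  - rewrite app_assoc in H. apply RedV_inv in H as [H _]. auto.
Qed.
Lemma RedV_no2 a b c x : RedV (a ++ x :: b ++ x :: c) -> ~ Forall (fun z => E z x) b.
Proof.
  intros H. replace (a ++ x :: b ++ x :: c) with (((a ++ x :: b) ++ [x]) ++ c) in H
    by (rewrite <- !app_assoc; reflexivity).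
  apply RedV_prefix, RedV_inv in H as [_ H]. apply (H a b); auto.
Qed.
Lemma RedV_remove s1 s2 x : Forall (fun z => E z x) s2 -> RedV (s1 ++ x :: s2) -> RedV (s1 ++ s2).
Proof.
  revert s1; induction s2 using rev_ind; intros s1 Hf H.
  - rewrite app_nil_r. apply (RedV_prefix s1 [x]); auto.
  - apply Forall_app in Hf as [Hf Hy]. inversion Hy; subst.
    replace (s1 ++ x :: s2 ++ [x0]) with ((s1 ++ x :: s2) ++ [x0]) in H by (rewrite <- app_assoc; reflexivity).
    apply RedV_inv in H as [H Hn]. rewrite app_assoc. constructor; auto.
    intros t1 t2 Heq Hft. destruct (app_eq_app _ _ _ _ Heq) as [l [[A1 A2]|[A1 A2]]].
    + destruct l as [|y l']; simpl in A2; inversion A2; subst.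
      * apply (Hn (t1 ++ [] ++ [x]) t2); auto. lsolve.
      * apply (Hn t1 (l' ++ x :: s2)); [rewrite <- app_assoc; reflexivity|].
        apply Forall_app in Hft as [Hl Hs]. apply Forall_app; split; auto.
        constructor; auto. apply Esym; auto.
    + subst. apply (Hn (s1 ++ x :: l) t2); auto. rewrite <- app_assoc; reflexivity.
Qed.

Definition Red (r : W) := RedV (map (@projT1 _ _) r) /\ Forall (fun L : letter V C => projT2 L <> one (projT1 L)) r.

Lemma notail_V x r : (forall r1 t r2, ~IsTail x r r1 t r2) -> NoTailV x (map (@projT1 _ _) r).
Proof.
  intros H s1 s2 Heq Hf. destruct (map_eq_app _ _ _ _ Heq) as (l1&l2&->&H1&H2).
  destruct (map_eq_cons _ _ H2) as ([y t]&l2'&->&Hy&H3). simpl in Hy; subst y.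
  apply (H l1 t l2'). split; auto. subst s2. apply Forall_map in Hf. exact Hf.
Qed.

Lemma Red_push r x m : Red r -> Red (push r x m).
Proof.
  intros [H1 H2]. destruct (classic (exists r1 t r2, IsTail x r r1 t r2)) as [[r1 [t [r2 HT]]]|H].
  - rewrite (push_tail _ _ _ _ _ _ HT). destruct HT as [-> Ha].
    rewrite map_app in H1; simpl in H1. apply Forall_app in H2 as [H2a H2b]. inversion H2b; subst.
    destruct (classic (mul x t m = one x)) as [Hm|Hm].
    + rewrite mk_one by auto. simpl. split.
      * rewrite map_app. apply (RedV_remove _ _ x); auto. apply Forall_map. exact Ha.
      * apply Forall_app; auto.
    + rewrite mk_ne by auto. simpl. split.
      * rewrite map_app; simpl; auto.
      * apply Forall_app; split; auto.
  - rewrite push_notail by (intros a b c Hc; apply H; eauto).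
    destruct (classic (m = one x)) as [Hm|Hm].
    + rewrite mk_one, app_nil_r by auto. split; auto.
    + rewrite mk_ne by auto. split.
      * rewrite map_app; simpl. constructor; auto. apply notail_V. intros a b c Hc; apply H; eauto.
      * apply Forall_app; split; auto.
Qed.

Lemma Red_notail_after rho x r1 t r2 : Red rho -> IsTail x rho r1 t r2 ->
  forall s1 t' s2, ~ IsTail x (r1 ++ r2) s1 t' s2.
Proof.
  intros [HR _] [-> Ha] s1 t' s2 [Heq Hs].
  destruct (app_eq_app _ _ _ _ Heq) as [l [[H1 H2]|[H1 H2]]].
  - destruct l as [|y l']; simpl in H2; inversion H2; subst.
    + inversion Ha as [|a0 l0 Hadj]; subst. unfold adj in Hadj; simpl in Hadj. exact (Eirr _ Hadj).
    + apply Forall_app in Hs as [Hl Hr2].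
      rewrite <- app_assoc in HR; simpl in HR. rewrite !map_app in HR; simpl in HR. rewrite map_app in HR; simpl in HR.
      apply (RedV_no2 _ _ _ _ HR). apply Forall_map. exact Hl.
  - subst. apply Forall_app in Ha as [_ Ha]. inversion Ha as [|a0 l0 Hadj]; subst. unfold adj in Hadj; simpl in Hadj.
    exact (Eirr _ Hadj).
Qed.

Definition G (rho : W) (w : W) : W :=
  fold_left (fun acc (L : letter V C) => push acc (projT1 L) (projT2 L)) w rho.

Lemma G_app rho a b : G rho (a ++ b) = G (G rho a) b.
Proof. apply fold_left_app. Qed.
Lemma Eqv_G rho rho' w : Eqv rho rho' -> Eqv (G rho w) (G rho' w).
Proof. revert rho rho'; induction w; simpl; auto. intros; apply IHw, Eqv_push; auto. Qed.
Lemma Red_G rho w : Red rho -> Red (G rho w).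
Proof. revert rho; induction w; simpl; auto. intros; apply IHw, Red_push; auto. Qed.
Lemma Red_nil : Red []. Proof. split; constructor. Qed.

Lemma Eqv_move x b r1 r2 : Forall (adj x) r2 -> Eqv ((r1 ++ r2) ++ mk x b) (r1 ++ mk x b ++ r2).
Proof.
  intros Ha p q Hpq. rewrite !fp_app. destruct (classic (x = p \/ x = q)).
  - rewrite (fp_adj_nil p q x r2), !app_nil_r; auto.
  - rewrite fp_mk_out, !app_nil_r; auto.
Qed.

Lemma B2 rho l r : Red rho -> gp_rel V E C mul one l r -> Eqv (G rho l) (G rho r).
Proof.
  intros HR Hrel; destruct Hrel as [x|x a b|x y m n Hxy]; unfold G; simpl.
  - destruct (classic (exists r1 t r2, IsTail x rho r1 t r2)) as [[r1 [t [r2 HT]]]|H].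
    + rewrite (push_tail _ _ _ _ _ _ HT), mrid. destruct HR as [_ HF]. destruct HT as [Hrho _].
      rewrite Hrho in HF. apply Forall_app in HF as [_ HF]. inversion HF; subst.
      rewrite mk_ne by auto. apply Eqv_refl.
    + rewrite push_notail by (intros a b c Hc; apply H; eauto). rewrite mk_one, app_nil_r by auto.
      apply Eqv_refl.
  - destruct (classic (exists r1 t r2, IsTail x rho r1 t r2)) as [[r1 [t [r2 HT]]]|H].
    + rewrite (push_tail _ _ _ _ _ a HT), (push_tail _ _ _ _ _ (mul x a b) HT), massoc.
      destruct (classic (mul x t a = one x)) as [Hta|Hta].
      * rewrite mk_one by auto. simpl. rewrite Hta, mlid.
        rewrite push_notail by (apply (Red_notail_after _ _ _ _ _ HR HT)).
        apply Eqv_move. apply HT.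
      * rewrite mk_ne by auto. simpl.
        rewrite (push_tail x _ r1 (mul x t a) r2); [apply Eqv_refl|]. split; auto. apply HT.
    + rewrite (push_notail x rho a), (push_notail x rho (mul x a b)) by (intros a0 b0 c0 Hc; apply H; eauto).
      destruct (classic (a = one x)) as [Ha|Ha].
      * subst a. rewrite mk_one, app_nil_r, mlid by auto.
        rewrite push_notail by (intros a0 b0 c0 Hc; apply H; eauto). apply Eqv_refl.
      * rewrite mk_ne by auto. rewrite (push_tail x _ rho a []).
        -- rewrite app_nil_r. apply Eqv_refl.
        -- split; auto.
  - intros p q Hpq.
    assert (Hxy' : E y x) by (apply Esym; auto).
    destruct (classic (x = p \/ x = q)) as [Hx|Hx]; destruct (classic (y = p \/ y = q)) as [Hy|Hy].
    + exfalso. destruct Hx as [<-|<-], Hy as [<-|<-];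
      first [exact (Eirr _ Hxy) | exact (Hpq Hxy) | exact (Hpq Hxy')].
    + rewrite fp_push_out by auto. apply fp_push_in_eq; auto.
      intros z Hz. rewrite fp_push_out; auto. intros [He|He]; subst; first [exact (Eirr _ Hxy) | exact (Hz Hxy) | exact (Hz Hxy')].
    + rewrite (fp_push_out p q x) by auto. symmetry. apply fp_push_in_eq; auto.
      intros z Hz. rewrite fp_push_out; auto. intros [He|He]; subst; first [exact (Eirr _ Hxy) | exact (Hz Hxy) | exact (Hz Hxy')].
    + rewrite !fp_push_out; auto.
Qed.

Lemma Eqv_gp w1 w2 : geq w1 w2 -> Eqv (G [] w1) (G [] w2).
Proof.
  induction 1.
  - rewrite !G_app. apply Eqv_G, B2; auto. apply Red_G, Red_nil.
  - apply Eqv_refl.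
  - apply Eqv_sym; auto.
  - eapply Eqv_trans; eauto.
Qed.

Lemma geq_ctx a b s t : geq a b -> geq (s ++ a ++ t) (s ++ b ++ t).
Proof.
  induction 1.
  - replace (s ++ (s0 ++ l ++ t0) ++ t) with ((s ++ s0) ++ l ++ (t0 ++ t)) by lsolve.
    replace (s ++ (s0 ++ r ++ t0) ++ t) with ((s ++ s0) ++ r ++ (t0 ++ t)) by lsolve.
    apply gp_step; auto.
  - apply gp_refl.
  - apply gp_sym; auto.
  - eapply gp_trans; eauto.
Qed.
Lemma geq_cons L a b : geq a b -> geq (L :: a) (L :: b).
Proof. intro H. pose proof (geq_ctx a b [L] [] H). rewrite !app_nil_r in H0. exact H0. Qed.
Lemma geq_app_l s a b : geq a b -> geq (s ++ a) (s ++ b).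
Proof. intro H. pose proof (geq_ctx a b s [] H). rewrite !app_nil_r in H0. exact H0. Qed.
Lemma geq_eq a b : a = b -> geq a b.
Proof. intros ->; apply gp_refl. Qed.

Lemma move_l x m r2 : Forall (adj x) r2 -> geq (r2 ++ [existT C x m]) (existT C x m :: r2).
Proof.
  induction r2 as [|[y n] r2 IH]; intros Hf; simpl. apply gp_refl.
  inversion Hf as [|a0 l0 Hyx Hr]; subst. unfold adj in Hyx; simpl in Hyx.
  eapply gp_trans. apply geq_cons, IH; auto.
  apply (gp_step V E C mul one [] [existT C y n; existT C x m] [existT C x m; existT C y n] r2).
  constructor; auto.
Qed.

Lemma push_eq r x m : geq (r ++ [existT C x m]) (push r x m).
Proof.
  destruct (classic (exists r1 t r2, IsTail x r r1 t r2)) as [[r1 [t [r2 HT]]]|H].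
  - rewrite (push_tail _ _ _ _ _ _ HT). destruct HT as [-> Ha].
    apply (gp_trans _ _ _ _ _ _ ((r1 ++ [existT C x t]) ++ (r2 ++ [existT C x m]))).
    { apply geq_eq. lsolve. }
    apply (gp_trans _ _ _ _ _ _ ((r1 ++ [existT C x t]) ++ (existT C x m :: r2))).
    { apply geq_app_l, move_l; auto. }
    apply (gp_trans _ _ _ _ _ _ (r1 ++ [existT C x t; existT C x m] ++ r2)).
    { apply geq_eq. lsolve. }
    apply (gp_trans _ _ _ _ _ _ (r1 ++ [existT C x (mul x t m)] ++ r2)).
    { apply gp_step. constructor. }
    destruct (classic (mul x t m = one x)) as [Hm|Hm].
    + rewrite mk_one by auto. rewrite Hm. apply gp_step. constructor.
    + rewrite mk_ne by auto. apply gp_refl.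
  - rewrite push_notail by (intros a b c Hc; apply H; eauto).
    destruct (classic (m = one x)) as [Hm|Hm].
    + rewrite mk_one by auto. subst.
      apply (gp_trans _ _ _ _ _ _ (r ++ [existT C x (one x)] ++ [])). { apply geq_eq; lsolve. }
      apply (gp_trans _ _ _ _ _ _ (r ++ [] ++ [])). { apply gp_step. constructor. }
      apply geq_eq; lsolve.
    + rewrite mk_ne by auto. apply gp_refl.
Qed.

Lemma F_eq w : geq w (G [] w).
Proof.
  induction w using rev_ind. apply gp_refl.
  rewrite G_app. simpl. eapply gp_trans.
  - pose proof (geq_ctx _ _ [] [x] IHw). simpl in H. exact H.
  - destruct x as [y n]. apply push_eq.
Qed.

Lemma tail_push_nonunit r v c : ~ is_unit (C v) (mul v) (one v) c ->
  exists r1 r2 s, IsTail v (push r v c) r1 (mul v s c) r2.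
Proof.
  intro Hc. destruct (classic (exists r1 t r2, IsTail v r r1 t r2)) as [[r1 [t [r2 HT]]]|H].
  - rewrite (push_tail _ _ _ _ _ _ HT). rewrite mk_ne by (apply nonunit_prod; auto).
    exists r1, r2, t. split; auto. apply HT.
  - rewrite push_notail by (intros a b c' Hc'; apply H; eauto).
    rewrite mk_ne by (apply nonunit_ne; auto). exists r, [], (one v). rewrite mlid. split; auto.
Qed.

Lemma tail_of_div w x0 v c : ~ is_unit (C v) (mul v) (one v) c -> geq w (x0 ++ [existT C v c]) ->
  exists r1 r2 s, IsTail v (G [] w) r1 (mul v s c) r2.
Proof.
  intros Hc Hw. apply Eqv_gp in Hw. rewrite G_app in Hw. simpl in Hw.
  destruct (tail_push_nonunit (G [] x0) v c Hc) as (r1&r2&s&HT).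
  destruct (tail_transfer _ _ (G [] w) _ _ _ HT) as (r1'&r2'&HT').
  - intros z Hz. symmetry. apply Hw. auto.
  - eauto.
Qed.

Lemma fin4 u v (Huv : E u v) s c s' d :
  geq [existT C v (mul v s c); existT C u (mul u s' d)]
      [existT C v s; existT C u s'; existT C v c; existT C u d].
Proof.
  apply (gp_trans _ _ _ _ _ _ [existT C v s; existT C v c; existT C u (mul u s' d)]).
  { apply gp_sym. exact (gp_step V E C mul one [] _ _ [existT C u (mul u s' d)] (gp_mul V E C mul one v s c)). }
  apply (gp_trans _ _ _ _ _ _ [existT C v s; existT C v c; existT C u s'; existT C u d]).
  { apply gp_sym. exact (gp_step V E C mul one [existT C v s; existT C v c] _ _ [] (gp_mul V E C mul one u s' d)). }
  exact (gp_step V E C mul one [existT C v s] _ _ [existT C u d] (gp_comm V E C mul one v u c s' (Esym _ _ Huv))).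
Qed.

Lemma main_dir u v (Huv : E u v) c d
  (Hc : ~ is_unit (C v) (mul v) (one v) c) (Hd : ~ is_unit (C u) (mul u) (one u) d) w x0 y0 :
  geq w (x0 ++ [existT C v c]) -> geq w (y0 ++ [existT C u d]) ->
  exists z, geq w (z ++ [existT C v c; existT C u d]).
Proof.
  intros H1 H2.
  destruct (tail_of_div _ _ _ _ Hc H1) as (r1&r2&s&[Hr Hra]).
  destruct (tail_of_div _ _ _ _ Hd H2) as (q1&q2&s'&[Hq Hqa]).
  assert (HP : exists P, geq (G [] w) (P ++ [existT C v (mul v s c); existT C u (mul u s' d)])).
  { assert (Hne : existT C v (mul v s c) <> existT C u (mul u s' d)).
    { intro He. apply (f_equal (@projT1 _ _)) in He. simpl in He. subst. exact (Eirr _ Huv). }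
    pose proof Hr as Hr0. rewrite Hq in Hr0.
    destruct (two_split _ _ _ _ _ _ (eq_sym Hr0) Hne) as [[k [Hk1 Hk2]]|[k [Hk1 Hk2]]].
    - exists (q1 ++ k ++ r2). rewrite Hq.
      apply (gp_trans _ _ _ _ _ _ (q1 ++ q2 ++ [existT C u (mul u s' d)])).
      { apply geq_app_l, gp_sym, move_l; auto. }
      rewrite Hk2.
      apply (gp_trans _ _ _ _ _ _ ((q1 ++ k) ++ (existT C v (mul v s c) :: r2) ++ [existT C u (mul u s' d)])).
      { apply geq_eq; lsolve. }
      apply (gp_trans _ _ _ _ _ _ ((q1 ++ k) ++ (r2 ++ [existT C v (mul v s c)]) ++ [existT C u (mul u s' d)])).
      { apply geq_ctx, gp_sym, move_l; auto. }
      apply geq_eq; lsolve.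
    - exists (r1 ++ k ++ q2). rewrite Hq.
      apply (gp_trans _ _ _ _ _ _ (q1 ++ q2 ++ [existT C u (mul u s' d)])).
      { apply geq_app_l, gp_sym, move_l; auto. }
      rewrite Hk1.
      apply (gp_trans _ _ _ _ _ _ (r1 ++ (existT C v (mul v s c) :: (k ++ q2)) ++ [existT C u (mul u s' d)])).
      { apply geq_eq; lsolve. }
      apply (gp_trans _ _ _ _ _ _ (r1 ++ ((k ++ q2) ++ [existT C v (mul v s c)]) ++ [existT C u (mul u s' d)])).
      { apply geq_ctx, gp_sym, move_l; auto. rewrite Hk2 in Hra.
        apply Forall_app in Hra as [Ha1 Ha2]. inversion Ha2; subst. apply Forall_app; auto. }
      apply geq_eq; lsolve. }
  destruct HP as [P HP].
  exists (P ++ [existT C v s; existT C u s']).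
  eapply gp_trans. apply F_eq. eapply gp_trans. apply HP.
  apply (gp_trans _ _ _ _ _ _ (P ++ [existT C v s; existT C u s'; existT C v c; existT C u d])).
  - apply geq_app_l, fin4; auto.
  - apply geq_eq; lsolve.
Qed.

End GP.

Theorem lemma2p5
  (V : Type) (E : V -> V -> Prop) (HE : is_graph V E)
  (C : V -> Type) (mul : forall v, C v -> C v -> C v) (one : forall v, C v)
  (Hmon : forall v, is_monoid (C v) (mul v) (one v))
  (Hrc : forall v, right_cancellative (C v) (mul v))
  (u v : V) (Huv : E u v)
  (c : C v) (Hc : ~ is_unit (C v) (mul v) (one v) c)
  (d : C u) (Hd : ~ is_unit (C u) (mul u) (one u) d) :
  forall w : word V C,
    ((exists x, gp_eq V E C mul one w (x ++ [existT _ v c])) /\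
     (exists y, gp_eq V E C mul one w (y ++ [existT _ u d])))
    <->
    (exists z, gp_eq V E C mul one w (z ++ [existT _ v c; existT _ u d])).
Proof.
  intro w. split.
  - intros [[x0 H1] [y0 H2]]. eapply main_dir; eauto.
  - intros [z Hz]. split.
    + exists (z ++ [existT _ u d]).
      eapply gp_trans. exact Hz.
      apply (gp_trans _ _ _ _ _ _ (z ++ [existT _ u d; existT _ v c] ++ [])).
      * exact (gp_step V E C mul one z _ _ [] (gp_comm V E C mul one v u c d (proj2 HE _ _ Huv))).
      * apply geq_eq. lsolve.
    + exists (z ++ [existT _ v c]). eapply gp_trans. exact Hz. apply geq_eq. lsolve.
Qed.
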